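(* Let $\mathbb{K}$ be a field and $f=a_0(x)+a_1(x)y+\cdots+a_n(x)y^n\in\mathbb{K}[x,y]$ with $n\geq 2$, $a_0,\ldots,a_n\in\mathbb{K}[x]$, $a_0a_n\neq 0$. Assume that $f$ has no nonconstant factor in $\mathbb{K}[x]$, and let $\nu_0$ and $\nu_n$ be the number of irreducible factors of $a_0(x)$ and $a_n(x)$ in $\mathbb{K}[x]$, respectively, counted with their multiplicities. Then $f$ is a product of at most $\nu=\min\{\nu_0,\nu_n\}$ irreducible polynomials over $\mathbb{K}[x]$ in each of the following two cases: (i) $a_0$ is reducible over $\mathbb{K}$, $\deg a_n\geq\deg a_0-\deg q$ where $q\in\mathbb{K}[x]$ is an irreducible factor of $a_0$ of smallest degree, and $\deg a_0>\max\{\deg a_1,\dots,\deg a_n\}$; (ii) $a_n$ is reducible over $\mathbb{K}$, $\deg a_0\geq\deg a_n-\deg q$ where $q\in\mathbb{K}[x]$ is an irreducible factor of $a_n$ of smallest degree, and $\deg a_n>\max\{\deg a_0,\dots,\deg a_{n-1}\}$.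
   Context: $f$ is regarded as a polynomial in $y$ with coefficients in $\mathbb{K}[x]$; ''a product of at most $k$ irreducible polynomials over $\mathbb{K}[x]$'' means that in the factorization of $f$ into irreducible elements of $\mathbb{K}[x][y]$ the number of factors, counted with multiplicities, is at most $k$. *)

(* Defs.v *)
From HB Require Import structures.
From mathcomp Require Import all_boot all_order all_algebra.
Set Implicit Arguments. Unset Strict Implicit. Unset Printing Implicit Defensive.
Import GRing.Theory.
Local Open Scope ring_scope.

Definition irred_elt (R : idomainType) (p : R) : Prop :=
  [/\ p != 0, p \isn't a GRing.unit &
      forall a b : R, p = a * b -> a \is a GRing.unit \/ b \is a GRing.unit].

Definition nfactors (K : fieldType) (p : {poly K}) (k : nat) : Prop :=
  exists s : seq {poly K},
    [/\ size s = k, (forall q, q \in s -> irreducible_poly q) &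
        p %= \prod_(q <- s) q].

Definition prod_at_most_irred (K : fieldType) (f : {poly {poly K}}) (k : nat) : Prop :=
  exists s : seq {poly {poly K}},
    [/\ (size s <= k)%N, (forall g, g \in s -> irred_elt g) &
        f = \prod_(g <- s) g].

Definition reducible_poly (K : fieldType) (p : {poly K}) : Prop :=
  (1 < size p)%N /\ ~ irreducible_poly p.

(* Main.v *)
Require Import Defs.
From HB Require Import structures.
From mathcomp Require Import all_boot all_order all_algebra.
From mathcomp Require Import zify.
From Stdlib Require Import Classical.
Import GRing.Theory.
Local Open Scope ring_scope.

Lemma monoM (K : fieldType) (a b : {poly K}) m : a != 0 -> b != 0 ->
  (forall j, j != m -> (a*b)`_j = 0) ->
  exists ma mb, [/\ (ma + mb = m)%N, (forall j, j != ma -> a`_j = 0) &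
                   (forall j, j != mb -> b`_j = 0)].
Proof.
move=> a0 b0 hab.
have [ma [qa]] := multiplicity_XsubC a 0; rewrite a0 subr0 /= => nqa Ea.
have [mb [qb]] := multiplicity_XsubC b 0; rewrite b0 subr0 /= => nqb Eb.
have Eab : a * b = (qa * qb) * 'X^(ma + mb).
  by rewrite Ea Eb exprD mulrACA.
have q0 : (qa * qb)`_0 != 0.
  by rewrite coef0M mulf_neq0 // -horner_coef0.
have Em : (ma + mb = m)%N.
  apply/eqP; apply: contraNT q0 => /hab; rewrite Eab coefMXn ltnn subnn => ->.
  by [].
have szq : (size (qa * qb)%R <= 1)%N.
  apply/leq_sizeP => j hj; have := hab (j + m)%N.
  rewrite Eab coefMXn Em; have -> : (j + m < m)%N = false by lia.
  rewrite addnK; apply; lia.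
have qa0 : qa != 0 by apply: contraNneq nqa => ->; rewrite /root horner0.
have qb0 : qb != 0 by apply: contraNneq nqb => ->; rewrite /root horner0.
rewrite size_mul // in szq.
have sa : (size qa <= 1)%N.
  have := size_poly_gt0 qb; rewrite qb0 => h; move: szq h.
  set x := size qa; set y := size qb; lia.
have sb : (size qb <= 1)%N.
  have := size_poly_gt0 qa; rewrite qa0 => h; move: szq h.
  set x := size qa; set y := size qb; lia.
exists ma, mb; split => // j hj.
  rewrite Ea (size1_polyC sa) coefMXn coefC; case: ifP => // /negbT; rewrite -leqNgt => h.
  by have -> : (j - ma == 0)%N = false by lia.
rewrite Eb (size1_polyC sb) coefMXn coefC; case: ifP => // /negbT; rewrite -leqNgt => h.
by have -> : (j - mb == 0)%N = false by lia.
Qed.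

Lemma natl1 a b c : (a < b)%N -> (b <= c)%N -> (a <= c.-1)%N.
Proof. lia. Qed.

Section S.
Variable K : fieldType.
Implicit Types u F G H : {poly {poly K}}.

Definition LL u : {poly K} := lead_coef (swapXY u).

Lemma LL_coef u j : (LL u)`_j = u`_j`_(sizeY u).-1.
Proof. by rewrite /LL lead_coefE coef_swapXY sizeYE. Qed.

Lemma LL_neq0 u : u != 0 -> LL u != 0.
Proof. by rewrite /LL lead_coef_eq0 swapXY_eq0. Qed.
Arguments LL_neq0 {u}.

Lemma LLM u v : LL (u * v) = LL u * LL v.
Proof. by rewrite /LL rmorphM lead_coefM. Qed.

Lemma aux u k : u != 0 -> (forall j, j != k -> (LL u)`_j = 0) ->
  forall j, j != k -> (size (u`_j)%R < size (u`_k)%R)%N.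
Proof.
move=> u0 hL j jk.
have hk : (LL u)`_k != 0.
  apply/negP => /eqP hk; move/negP: (LL_neq0 u0); apply; apply/eqP/polyP => i.
  rewrite coef0; have [-> //|] := eqVneq i k; exact: hL.
rewrite LL_coef in hk.
have hk2 : ((sizeY u).-1 < size (u`_k)%R)%N.
  rewrite ltnNge; apply/negP => h; move/negP: hk; apply; apply/eqP; exact: nth_default.
have h1 := max_size_coefXY u j.
have h2 := hL j jk; rewrite LL_coef in h2.
suff : (size (u`_j)%R <= (sizeY u).-1)%N by lia.
case: (ltnP (sizeY u).-1 (size (u`_j)%R)) => // hlt.
have e : size (u`_j)%R = sizeY u.
  apply/eqP; rewrite eqn_leq h1 /=; by move: hlt; case: (sizeY u).
have : lead_coef u`_j = 0 by rewrite lead_coefE e.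
move/eqP; rewrite lead_coef_eq0 => /eqP uj; move: hlt; rewrite uj size_poly0.
lia.
Qed.

Lemma core F G H m : F = G * H -> G != 0 -> H != 0 ->
  (forall i, i != m -> (size (F`_i)%R < size (F`_m)%R)%N) ->
  exists mG mH, [/\ (mG + mH = m)%N,
     (forall j, j != mG -> (size (G`_j)%R < size (G`_mG)%R)%N) &
     (forall j, j != mH -> (size (H`_j)%R < size (H`_mH)%R)%N)].
Proof.
move=> EF G0 H0 hF.
have hLF : forall j, j != m -> (LL G * LL H)`_j = 0.
  move=> j jm; rewrite -LLM -EF LL_coef; apply: nth_default.
  exact: natl1 (hF j jm) (max_size_coefXY F m).
have [mG [mH [E hG hH]]] := @monoM _ _ _ _ (LL_neq0 G0) (LL_neq0 H0) hLF.
exists mG, mH; split => //; exact: aux.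
Qed.
End S.

Section Cnt.
Variable K : fieldType.
Implicit Types p q r : {poly K}.

Lemma irr_factor p : (1 < size p)%N -> exists r, irreducible_poly r /\ r %| p.
Proof.
have [n] := ubnP (size p); elim: n p => // n IH p szp hp.
case: (classic (irreducible_poly p)) => [ip|nip]; first by exists p; split.
have : ~ (forall q, size q != 1%N -> q %| p -> q %= p).
  by move=> h; apply: nip; split.
move/not_all_ex_not => [q hq].
have q1 : size q != 1%N by apply/negP => e; apply: hq => h; by rewrite e in h.
have qp : q %| p.
  case: (boolP (q %| p)) => // nqp; exfalso; apply: hq => _ h; by rewrite h in nqp.
have nqp : ~~ (q %= p) by apply/negP => e; apply: hq => _ _; exact e.
have p0 : p != 0 by rewrite -size_poly_gt0; lia.
have q0 : q != 0 by apply: contraNneq p0 => e; move: qp; rewrite e dvd0p.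
have le := dvdp_leq p0 qp.
have ne : size q != size p by rewrite (dvdp_size_eqp qp).
have szq : (1 < size q)%N.
  by move: q1 (size_poly_gt0 q); rewrite q0; case: (size q) => [|[]].
have hn : (size q < n)%N.
  have : (size q < size p)%N by rewrite ltn_neqAle ne le.
  move: szp; rewrite ltnS; move=> a b; exact: leq_trans b a.
have [r [ir rq]] := IH q hn szq.
by exists r; split => //; apply: dvdp_trans rq qp.
Qed.

Lemma prime_irr r (s : seq {poly K}) : irreducible_poly r ->
  (forall q, q \in s -> irreducible_poly q) -> r %| \prod_(q <- s) q ->
  exists2 q, q \in s & r %= q.
Proof.
move=> ir; elim: s => [|q s IH] hs.
  rewrite big_nil dvdp1 => /eqP e; by case: ir; rewrite e.
rewrite big_cons => hd.
have iq := hs q (mem_head _ _).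
case: (boolP (r %| q)) => rq.
  exists q; first exact: mem_head.
  by apply: iq => //; case: ir => /= h _; apply/eqP => e; rewrite e in h.
rewrite -(irreducible_poly_coprime q ir) in rq.
rewrite Gauss_dvdpr // in hd.
have hs' : forall x, x \in s -> irreducible_poly x.
  by move=> x xs; apply: hs; rewrite inE xs orbT.
have [q' q's rq'] := IH hs' hd.
by exists q' => //; rewrite inE q's orbT.
Qed.

Lemma count_le (t s : seq {poly K}) : (forall x, x \in t -> 1 < size x)%N ->
  (forall q, q \in s -> irreducible_poly q) ->
  \prod_(x <- t) x %| \prod_(q <- s) q -> (size t <= size s)%N.
Proof.
elim: t s => [//|b t IH] s ht hs hd.
have [r [ir rb]] := @irr_factor b (ht b (mem_head _ _)).
rewrite big_cons in hd.
have rs : r %| \prod_(q <- s) q.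
  by apply: dvdp_trans rb (dvdp_trans (dvdp_mulIl b _) hd).
have [q qs rq] := @prime_irr _ _ ir hs rs.
have r0 : r != 0 by apply: irredp_neq0.
rewrite (big_rem _ qs) /= in hd.
have e1 : q * \prod_(y <- rem q s) y %= \prod_(y <- rem q s) y * r.
  by rewrite mulrC; apply: eqp_mull; rewrite eqp_sym.
rewrite (eqp_dvdr _ e1) -(divpK rb) mulrAC dvdp_mul2r // in hd.
have ht' : (size t <= size (rem q s))%N.
  apply: IH.
  - by move=> x xt; apply: ht; rewrite inE xt orbT.
  - by move=> x /mem_rem; apply: hs.
  - exact: dvdp_trans (dvdp_mulIr _ _) hd.
rewrite size_rem // in ht'.
have : (0 < size s)%N by case: (s) qs.
move=> h0; rewrite /= -(prednK h0) ltnS; exact ht'.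
Qed.
End Cnt.

Section Fact.
Variable K : fieldType.
Implicit Types u g p : {poly {poly K}}.

Lemma sizeYM u v : u != 0 -> v != 0 -> sizeY (u * v) = (sizeY u + sizeY v).-1.
Proof.
by move=> u0 v0; rewrite !sizeYE rmorphM size_mul // swapXY_eq0.
Qed.

Lemma unit_const g : g != 0 -> (size g <= 1)%N -> (size (g`_0)%R <= 1)%N ->
  g \is a GRing.unit.
Proof.
move=> g0 h1 h2.
have e := size1_polyC h1.
have g00 : g`_0 != 0 by apply: contraNneq g0 => e0; rewrite e e0.
rewrite poly_unitE; apply/andP; split.
  by rewrite eqn_leq h1 /= size_poly_gt0.
rewrite poly_unitE; apply/andP; split.
  by rewrite eqn_leq h2 /= size_poly_gt0.
rewrite unitfE; apply: contraNneq g00 => e0.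
by rewrite (size1_polyC h2) e0.
Qed.

Lemma nonunit_big g : g != 0 -> g \isn't a GRing.unit ->
  (2 < size g + sizeY g)%N.
Proof.
move=> g0 gu.
have s1 : (0 < size g)%N by rewrite size_poly_gt0.
have s2 : (0 < sizeY g)%N by rewrite lt0n sizeY_eq0.
case: (leqP (size g + sizeY g) 2) => // h.
have h1 : (size g <= 1)%N by lia.
have h2 : (size (g`_0)%R <= 1)%N.
  apply: leq_trans (max_size_coefXY g 0) _; lia.
by move/negP: gu; case; apply: unit_const.
Qed.

Lemma exfact p : p != 0 -> p \isn't a GRing.unit ->
  exists s, (forall g, g \in s -> irred_elt g) /\ p = \prod_(g <- s) g.
Proof.
have [n] := ubnP (size p + sizeY p)%N; elim: n p => // n IH p hn p0 pu.
case: (classic (irred_elt p)) => [ip|nip].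
  by exists [:: p]; split; [move=> g; rewrite inE => /eqP -> | rewrite big_seq1].
have : ~ (forall a b, p = a * b -> a \is a GRing.unit \/ b \is a GRing.unit).
  by move=> h; apply: nip; split.
move/not_all_ex_not => [a]; move/not_all_ex_not => [b hab].
have ep : p = a * b by apply: NNPP => h; apply: hab.
have au : a \isn't a GRing.unit by apply/negP => h; apply: hab => _; by left.
have bu : b \isn't a GRing.unit by apply/negP => h; apply: hab => _; by right.
have a0 : a != 0 by apply: contraNneq p0 => e; rewrite ep e mul0r.
have b0 : b != 0 by apply: contraNneq p0 => e; rewrite ep e mulr0.
have ha := @nonunit_big a a0 au; have hb := @nonunit_big b b0 bu.
have es : size p = (size a + size b).-1 by rewrite ep size_mul.
have eY : sizeY p = (sizeY a + sizeY b).-1 by rewrite ep sizeYM.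
have sa1 : (0 < size a)%N by rewrite size_poly_gt0.
have sa2 : (0 < sizeY a)%N by rewrite lt0n sizeY_eq0.
have sb1 : (0 < size b)%N by rewrite size_poly_gt0.
have sb2 : (0 < sizeY b)%N by rewrite lt0n sizeY_eq0.
have [sA [hA eA]] : exists s, (forall g, g \in s -> irred_elt g) /\ a = \prod_(g <- s) g.
  apply: IH => //; move: hn; rewrite es eY; lia.
have [sB [hB eB]] : exists s, (forall g, g \in s -> irred_elt g) /\ b = \prod_(g <- s) g.
  apply: IH => //; move: hn; rewrite es eY; lia.
exists (sA ++ sB); split; last by rewrite big_cat /= -eA -eB.
by move=> g; rewrite mem_cat => /orP [] ?; [apply: hA | apply: hB].
Qed.
End Fact.

Lemma natA G0 H0 LH Q R : (1 < G0)%N -> (0 < LH)%N -> (LH < H0)%N -> (Q <= R)%N ->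
  (R <= G0)%N -> (((G0 + H0).-1).-1 <= LH.-1 + Q.-1)%N -> False.
Proof. lia. Qed.

Section Key.
Variable K : fieldType.
Implicit Types f g h : {poly {poly K}}.

Lemma key_i f g h (q : {poly K}) : f = g * h -> f != 0 -> (1 < size g)%N ->
  h = 1 \/ (1 < size h)%N ->
  (forall i, i != 0%N -> (size (f`_i)%R < size (f`_0)%R)%N) ->
  (forall r, irreducible_poly r -> r %| f`_0 -> (size q <= size r)%N) ->
  ((size (f`_0)%R).-1 <= (size (lead_coef f)).-1 + (size q).-1)%N ->
  (1 < size (lead_coef f))%N ->
  (1 < size (g`_0)%R)%N /\ (1 < size (lead_coef g))%N.
Proof.
move=> ef f0 sg hh hmax hq hdeg hbig.
have g0 : g != 0 by apply: contraNneq f0 => e; rewrite ef e mul0r.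
have h0 : h != 0 by apply: contraNneq f0 => e; rewrite ef e mulr0.
have [mG [mH [E hG hH]]] := @core K f g h _ ef g0 h0 hmax.
have mG0 : mG = 0%N by lia.
have mH0 : mH = 0%N by lia.
subst mG mH.
have lg0 : lead_coef g != 0 by rewrite lead_coef_eq0.
have slg1 : (0 < size (lead_coef g))%N by rewrite size_poly_gt0.
have sg0 : (1 < size (g`_0)%R)%N.
  have := hG (size g).-1; rewrite -lead_coefE => h1.
  have : (size (lead_coef g) < size (g`_0)%R)%N by apply: h1; lia.
  lia.
split => //.
case: (leqP (size (lead_coef g)) 1) => // hl; exfalso.
case: hh => [h1|hh].
  by move: hbig; rewrite ef h1 mulr1; lia.
have lh0 : lead_coef h != 0 by rewrite lead_coef_eq0.
have hh1 : (size (lead_coef h) < size (h`_0)%R)%N.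
  have := hH (size h).-1; rewrite -lead_coefE => h1; apply: h1; lia.
have e1 : size (lead_coef f) = size (lead_coef h).
  have e : size (lead_coef g) = 1%N by apply/eqP; rewrite eqn_leq hl slg1.
  by rewrite ef lead_coefM size_mul // e.
have g00 : g`_0 != 0 by rewrite -size_poly_gt0; lia.
have h00 : h`_0 != 0 by rewrite -size_poly_gt0; lia.
have e2 : size (f`_0)%R = (size (g`_0)%R + size (h`_0)%R).-1.
  by rewrite ef coef0M size_mul.
have [r [ir rg]] := @irr_factor K _ sg0.
have rf : r %| f`_0 by rewrite ef coef0M; apply: dvdp_trans rg (dvdp_mulIl _ _).
have l1 := hq r ir rf.
have l2 := dvdp_leq g00 rg.
have lh1 : (0 < size (lead_coef h))%N by rewrite size_poly_gt0.
move: hdeg; rewrite e1 e2 => hdeg.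
exact: (@natA _ _ _ _ _ sg0 lh1 hh1 l1 l2 hdeg).
Qed.
End Key.

Section Key2.
Variable K : fieldType.
Implicit Types f g h u : {poly {poly K}}.

Lemma idx_lt u m : (forall j, j != m -> (size (u`_j)%R < size (u`_m)%R)%N) ->
  (m < size u)%N.
Proof.
move=> hu; rewrite ltnNge; apply/negP => hm.
have := hu m.+1; rewrite (nth_default _ hm) size_poly0.
have ne : m.+1 != m by rewrite neq_ltn ltnSn orbT.
by move=> /(_ ne).
Qed.

Lemma natB a b c d : (0 < a)%N -> (0 < b)%N -> (c < a)%N -> (d < b)%N ->
  (c + d = (a + b).-1.-1)%N -> c = a.-1.
Proof. lia. Qed.

Lemma key_ii f g h (q : {poly K}) : f = g * h -> f != 0 -> (1 < size g)%N ->
  h = 1 \/ (1 < size h)%N -> f`_0 != 0 ->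
  (forall i, i != (size f).-1 -> (size (f`_i)%R < size (f`_((size f).-1))%R)%N) ->
  (forall r, irreducible_poly r -> r %| lead_coef f -> (size q <= size r)%N) ->
  ((size (lead_coef f)).-1 <= (size (f`_0)%R).-1 + (size q).-1)%N ->
  (1 < size (f`_0)%R)%N ->
  (1 < size (g`_0)%R)%N /\ (1 < size (lead_coef g))%N.
Proof.
move=> ef f0 sg hh fz hmax hq hdeg hbig.
have g0 : g != 0 by apply: contraNneq f0 => e; rewrite ef e mul0r.
have h0 : h != 0 by apply: contraNneq f0 => e; rewrite ef e mulr0.
have [mG [mH [E hG hH]]] := @core K f g h _ ef g0 h0 hmax.
have lG := @idx_lt _ _ hG; have lH := @idx_lt _ _ hH.
have es : size f = (size g + size h).-1 by rewrite ef size_mul.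
rewrite es in E.
have eG : mG = (size g).-1.
  apply: (@natB _ _ _ _ _ _ lG lH E); rewrite size_poly_gt0 //.
have eH : mH = (size h).-1.
  apply: (@natB _ _ _ _ _ _ lH lG); rewrite ?size_poly_gt0 //.
  by rewrite addnC E addnC.
subst mG mH; rewrite -lead_coefE in hG; rewrite -lead_coefE in hH.
have g00 : g`_0 != 0 by apply: contraNneq fz => e; rewrite ef coef0M e mul0r.
have h00 : h`_0 != 0 by apply: contraNneq fz => e; rewrite ef coef0M e mulr0.
have sg00 : (0 < size (g`_0)%R)%N by rewrite size_poly_gt0.
have slg : (1 < size (lead_coef g))%N.
  have : (size (g`_0)%R < size (lead_coef g))%N by apply: hG; lia.
  move=> h1; exact: leq_ltn_trans sg00 h1.
split => //.
case: (leqP (size (g`_0)%R) 1) => // hl; exfalso.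
case: hh => [h1|hh].
  by move: hbig; rewrite ef h1 mulr1; rewrite ltnNge hl.
have hh1 : (size (h`_0)%R < size (lead_coef h))%N by apply: hH; lia.
have e1 : size (f`_0)%R = size (h`_0)%R.
  have e : size (g`_0)%R = 1%N by apply/eqP; rewrite eqn_leq hl sg00.
  by rewrite ef coef0M size_mul // e.
have lg0 : lead_coef g != 0 by rewrite lead_coef_eq0.
have lh0 : lead_coef h != 0 by rewrite lead_coef_eq0.
have e2 : size (lead_coef f) = (size (lead_coef g) + size (lead_coef h)).-1.
  by rewrite ef lead_coefM size_mul.
have [r [ir rg]] := @irr_factor K _ slg.
have rf : r %| lead_coef f.
  by rewrite ef lead_coefM; apply: dvdp_trans rg (dvdp_mulIl _ _).
have l1 := hq r ir rf.
have l2 := dvdp_leq lg0 rg.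
have sh1 : (0 < size (h`_0)%R)%N by rewrite size_poly_gt0.
move: hdeg; rewrite e1 e2 => hdeg.
exact: (@natA _ _ _ _ _ slg sh1 hh1 l1 l2 hdeg).
Qed.
End Key2.

Lemma natC P E D Q1 Q2 R1 R2 : (1 < E)%N -> (1 < D)%N -> (Q1 <= R1)%N -> (R1 <= D)%N ->
  (Q2 <= R2)%N -> (R2 <= E)%N -> Q1 = Q2 -> P = (E + D).-1 -> (2 * Q1.-1 <= P.-1)%N.
Proof. lia. Qed.

Lemma natD A B s : (1 < A)%N -> (s < B)%N -> (s.+1 < (A + B).-1)%N.
Proof. lia. Qed.

Section Misc.
Variable K : fieldType.

Lemma coef0_prod (l : seq {poly {poly K}}) :
  (\prod_(g <- l) g)`_0 = \prod_(g <- l) g`_0.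
Proof.
elim: l => [|x l IH]; first by rewrite !big_nil coef1.
by rewrite !big_cons coef0M IH.
Qed.

Lemma size_prod_ge (l : seq {poly {poly K}}) :
  (forall x, x \in l -> (1 < size x)%N) -> (size l < size (\prod_(x <- l) x)%R)%N.
Proof.
elim: l => [|x l IH] hl; first by rewrite big_nil size_poly1.
rewrite big_cons.
have hx := hl x (mem_head _ _).
have IH' : (size l < size (\prod_(y <- l) y)%R)%N.
  by apply: IH => y yl; apply: hl; rewrite inE yl orbT.
have x0 : x != 0 by rewrite -size_poly_gt0; apply: leq_trans hx.
have p0 : \prod_(y <- l) y != 0.
  by rewrite -size_poly_gt0; apply: leq_ltn_trans IH'.
rewrite size_mul //=; exact: (@natD _ _ _ hx IH').
Qed.

Lemma red_deg (p q : {poly K}) : reducible_poly p ->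
  (forall r, irreducible_poly r -> r %| p -> (size q <= size r)%N) ->
  (2 * (size q).-1 <= (size p).-1)%N.
Proof.
move=> [sp nip] hq.
have : ~ (forall x : {poly K}, size x != 1%N -> x %| p -> x %= p).
  by move=> h; apply: nip; split.
move/not_all_ex_not => [d hd].
have d1 : size d != 1%N by apply/negP => e; apply: hd => h; by rewrite e in h.
have dp : d %| p.
  case: (boolP (d %| p)) => // nqp; exfalso; apply: hd => _ h; by rewrite h in nqp.
have ndp : ~~ (d %= p) by apply/negP => e; apply: hd => _ _; exact e.
have p0 : p != 0 by rewrite -size_poly_gt0; apply: leq_trans sp.
have d0 : d != 0 by apply: contraNneq p0 => e; move: dp; rewrite e dvd0p.
have le := dvdp_leq p0 dp.
have ne : size d != size p by rewrite (dvdp_size_eqp dp).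
have szd : (1 < size d)%N.
  by move: d1 (size_poly_gt0 d); rewrite d0; case: (size d) => [|[]].
set e := p %/ d.
have ep : p = e * d by rewrite /e divpK.
have e0 : e != 0 by apply: contraNneq p0 => h; rewrite ep h mul0r.
have es : size p = (size e + size d).-1 by rewrite ep size_mul.
have sze : (1 < size e)%N.
  have lt : (size d < size p)%N by rewrite ltn_neqAle ne le.
  move: lt; rewrite es; move: szd; set D := size d; set E := size e; lia.
have [r1 [i1 r1d]] := @irr_factor K _ szd.
have [r2 [i2 r2e]] := @irr_factor K _ sze.
have l1 := hq r1 i1 (dvdp_trans r1d dp).
have ed : e %| p by rewrite ep dvdp_mulIl.
have l2 := hq r2 i2 (dvdp_trans r2e ed).
exact: (@natC _ _ _ _ _ _ _ sze szd l1 (dvdp_leq d0 r1d) l2 (dvdp_leq e0 r2e) erefl es).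
Qed.
End Misc.

Lemma natE A N Q : (1 < Q)%N -> (2 * Q.-1 <= A.-1)%N -> (A.-1 <= N.-1 + Q.-1)%N -> (1 < N)%N.
Proof. lia. Qed.

Theorem theorem2 (K : fieldType) (f : {poly {poly K}}) (nu0 nun : nat) :
  let n := (size f).-1 in
  let a : nat -> {poly K} := fun i => f`_i in
  (2 <= n)%N ->
  (a 0%N) * (a n) != 0 ->
  (forall d : {poly K}, (exists g, f = d%:P * g) -> (size d <= 1)%N) ->
  nfactors (a 0%N) nu0 ->
  nfactors (a n) nun ->
  ( (* case (i) *)
    (reducible_poly (a 0%N) /\
     (exists q : {poly K},
        [/\ irreducible_poly q, q %| (a 0%N),
            (forall r : {poly K}, irreducible_poly r -> r %| (a 0%N) ->
                 (size q <= size r)%N) &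
            ((size (a 0%N)).-1 <= (size (a n)).-1 + (size q).-1)%N]) /\
     (forall i, (1 <= i <= n)%N -> (size (a i) < size (a 0%N))%N))
  \/ (* case (ii) *)
    (reducible_poly (a n) /\
     (exists q : {poly K},
        [/\ irreducible_poly q, q %| (a n),
            (forall r : {poly K}, irreducible_poly r -> r %| (a n) ->
                 (size q <= size r)%N) &
            ((size (a n)).-1 <= (size (a 0%N)).-1 + (size q).-1)%N]) /\
     (forall i, (i < n)%N -> (size (a i) < size (a n))%N)) ) ->
  prod_at_most_irred f (minn nu0 nun).
Proof.
move=> n a hn2 ha hK h0 hN hcase.
have a00 : a 0%N != 0 by move: ha; rewrite mulf_eq0 negb_or => /andP[].
have an0 : a n != 0 by move: ha; rewrite mulf_eq0 negb_or => /andP[].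
have szf : size f = n.+1 by move: hn2; rewrite /n; case: (size f).
have fn0 : f != 0 by rewrite -size_poly_gt0 szf.
have fu : f \isn't a GRing.unit by rewrite poly_unitE szf; have -> : (n.+1 == 1)%N = false by lia.
have elf : lead_coef f = a n by rewrite lead_coefE.
have [s [hs ef]] := @exfact K f fn0 fu.
have sg : forall g, g \in s -> (1 < size g)%N.
  move=> g gs; case: (leqP (size g) 1) => // hg; exfalso.
  have [g0 gu _] := hs g gs.
  have e1 : f = (g`_0)%:P * \prod_(x <- rem g s) x by rewrite ef (big_rem _ gs) /= -(size1_polyC hg).
  have := hK _ (ex_intro _ _ e1) => hg0.
  by move/negP: gu; apply; apply: unit_const.
have hsplit : forall g, g \in s -> f = g * \prod_(x <- rem g s) x /\
    (\prod_(x <- rem g s) x = 1 \/ (1 < size (\prod_(x <- rem g s) x)%R)%N).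
  move=> g gs; split; first by rewrite ef (big_rem _ gs).
  case E: (rem g s) => [|y l]; first by left; rewrite big_nil.
  right; rewrite -E.
  have := @size_prod_ge K (rem g s).
  rewrite E /= => h; apply: leq_trans (h _); first by [].
  by move=> x xl; apply: sg; apply: (mem_rem (s:=s) (x:=g)); rewrite E.
have key : forall g, g \in s -> (1 < size (g`_0)%R)%N /\ (1 < size (lead_coef g))%N.
  move=> g gs; have [efg hh] := hsplit g gs.
  case: hcase => [[hred [[q [iq qd hq hdeg]] hmax]]|[hred [[q [iq qd hq hdeg]] hmax]]].
  - apply: (@key_i K f g _ q efg fn0 (sg g gs) hh).
    + move=> i i0; case: (leqP i n) => hin.
        by apply: hmax; rewrite hin andbT lt0n.
      rewrite nth_default ?size_poly0 ?size_poly_gt0 //; by rewrite szf.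
    + exact: hq.
    + by rewrite elf.
    + rewrite elf; have := @red_deg K _ _ hred hq; move: hdeg.
      have := irredp_neq0 iq; case: iq => iq1 _ _.
      move=> h1 h2; exact: (@natE _ _ _ iq1 h2 h1).
  - apply: (@key_ii K f g _ q efg fn0 (sg g gs) hh a00).
    + move=> i i0; rewrite -/n; case: (ltnP i n) => hin.
        by apply: hmax.
      have : i != n by [].
      move=> ne; have hin' : (n < i)%N by rewrite ltn_neqAle eq_sym ne hin.
      rewrite nth_default ?size_poly0 ?size_poly_gt0 //; by rewrite szf.
    + by rewrite elf.
    + by rewrite elf.
    + have := @red_deg K _ _ hred hq; move: hdeg.
      case: iq => iq1 _.
      move=> h1 h2; exact: (@natE _ _ _ iq1 h2 h1).
have e0 : a 0%N = \prod_(x <- map (fun g : {poly {poly K}} => g`_0) s) x.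
  by rewrite big_map /a ef coef0_prod.
have en : a n = \prod_(x <- map (@lead_coef _) s) x.
  by rewrite big_map -elf ef lead_coef_prod.
have [s0 [sz0 irr0 eq0]] := h0.
have [sn [szn irrn eqn]] := hN.
exists s; split => //.
rewrite leq_min; apply/andP; split.
  rewrite -sz0 -(size_map (fun g : {poly {poly K}} => g`_0) s); apply: count_le => //.
    by move=> x /mapP [g gs ->]; case: (key g gs).
  by rewrite -e0 -(eqp_dvdr _ eq0) dvdpp.
rewrite -szn -(size_map (@lead_coef _) s); apply: count_le => //.
  by move=> x /mapP [g gs ->]; case: (key g gs).
by rewrite -en -(eqp_dvdr _ eqn) dvdpp.
Qed.
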